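(* Let $G$ be a symmetric restaking network and $\alpha_t$ a tight attack in $G$. Then there exists a consolidated attack $\alpha_c$ in $G$ (for a suitable ordering $v_1,\dots,v_m$ of $V$) with $C(\alpha_c)\le C(\alpha_t)$ and $\Pi(\alpha_c)=\Pi(\alpha_t)$.
   Context: A restaking network is a tuple $G=(V,S,\sigma,w,\theta,\pi)$ with finite nonempty validator set $V$, finite service set $S$, stake $\sigma:V\to\mathbb{R}_{>0}$, allocation $w:V\times S\to\mathbb{R}_{\ge0}$ with $w(v,s)\le\sigma(v)$, thresholds $\theta:S\to[0,1]$, prizes $\pi:S\to\mathbb{R}_{>0}$. An attack is $\alpha:V\times S\to\mathbb{R}_{\ge0}$ with $\alpha(v,s)\le w(v,s)$; attacked services $S_\alpha=\{s:\sum_v\alpha(v,s)\ge\theta(s)\sum_v w(v,s)\}$; validator cost $c_v(\alpha)=\min(\sigma(v),\sum_{s\in S_\alpha}\alpha(v,s))$; total cost $C(\alpha)=\sum_vc_v(\alpha)$; prize $\Pi(\alpha)=\sum_{s\in S_\alpha}\pi(s)$. $G$ is symmetric if all validators have the same stake $\sigma$, for each $s$ all validators have the same allocation $w(s)$, and all services have the same threshold $\theta$. Let $m=|V|$. An attack is tight if $\sum_v\alpha(v,s)=\theta m\,w(s)$ for all $s\in S_\alpha$. With $V=\{v_1,\dots,v_m\}$, an attack is consolidated if for every $s\in S_\alpha$ and $i\in\{1,\dots,m\}$: $\alpha(v_i,s)=w(s)$ if $i\le\lfloor\theta m\rfloor$; $\alpha(v_i,s)=(\theta m-\lfloor\theta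 m\rfloor)w(s)$ if $i=\lfloor\theta m\rfloor+1$; $\alpha(v_i,s)=0$ otherwise. *)

(* Defs.v *)
From HB Require Import structures.
From mathcomp Require Import all_boot all_order all_algebra.
From mathcomp Require Import reals.
Set Implicit Arguments. Unset Strict Implicit. Unset Printing Implicit Defensive.
Import Order.TTheory GRing.Theory Num.Theory.
Local Open Scope ring_scope.

(* A restaking network G = (V,S,sigma,w,theta,pi); V and S are the finite types. *)
Record network (R : realType) (V S : finType) := Network {
  stake : V -> R;
  alloc : V -> S -> R;
  thr   : S -> R;
  prize : S -> R }.

Definition valid_network (R : realType) (V S : finType) (G : network R V S) : Prop :=
  [/\ (0 < #|V|)%N,
      (forall v, 0 < stake G v),
      (forall v s, 0 <= alloc G v s /\ alloc G v s <= stake G v),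
      (forall s, 0 <= thr G s /\ thr G s <= 1)
    & (forall s, 0 < prize G s)].

Definition is_attack (R : realType) (V S : finType) (G : network R V S)
  (a : V -> S -> R) : Prop :=
  forall v s, 0 <= a v s /\ a v s <= alloc G v s.

Definition attacked (R : realType) (V S : finType) (G : network R V S)
  (a : V -> S -> R) (s : S) : bool :=
  thr G s * (\sum_(v : V) alloc G v s) <= \sum_(v : V) a v s.

Definition vcost (R : realType) (V S : finType) (G : network R V S)
  (a : V -> S -> R) (v : V) : R :=
  Num.min (stake G v) (\sum_(s : S | attacked G a s) a v s).

Definition cost (R : realType) (V S : finType) (G : network R V S)
  (a : V -> S -> R) : R := \sum_(v : V) vcost G a v.

Definition prize_of (R : realType) (V S : finType) (G : network R V S)
  (a : V -> S -> R) : R := \sum_(s : S | attacked G a s) prize G s.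

Definition symmetric_with (R : realType) (V S : finType) (G : network R V S)
  (sg th : R) (ws : S -> R) : Prop :=
  [/\ (forall v, stake G v = sg),
      (forall v s, alloc G v s = ws s)
    & (forall s, thr G s = th)].

Definition symmetric (R : realType) (V S : finType) (G : network R V S) : Prop :=
  exists sg th ws, symmetric_with G sg th ws.

Definition tight (R : realType) (V S : finType) (G : network R V S)
  (th : R) (ws : S -> R) (a : V -> S -> R) : Prop :=
  forall s, attacked G a s -> \sum_(v : V) a v s = th * #|V|%:R * ws s.

(* consolidated w.r.t. the ordering ord : 'I_m -> V (v_{i} = ord (i-1));
   the 0-based index j corresponds to i = j+1. *)
Definition consolidated (R : realType) (V S : finType) (G : network R V S)
  (th : R) (ws : S -> R) (ord : 'I_#|V| -> V) (a : V -> S -> R) : Prop :=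
  forall s, attacked G a s -> forall j : 'I_#|V|,
    let i : int := (j.+1)%:Z in
    let fl : int := Num.floor (th * #|V|%:R) in
    a (ord j) s =
      if i <= fl then ws s
      else if i == fl + 1 then (th * #|V|%:R - fl%:~R) * ws s
      else 0.

(* Main.v *)
Require Import Defs.
From HB Require Import structures.
From mathcomp Require Import all_boot all_order all_algebra.
From mathcomp Require Import reals.
From mathcomp Require Import ring lra.
Import Order.TTheory GRing.Theory Num.Theory.
Local Open Scope ring_scope.

Definition cf {R : realType} (k : nat) (f : R) (j : nat) : R :=
  if (j.+1 <= k)%N then 1 else if j == k then f else 0.

Lemma sum_cf (R : realType) (F : R -> R) (m k : nat) (f : R) :
  F 0 = 0 -> (k <= m)%N -> (k = m -> f = 0) ->
  \sum_(j < m) F (cf k f j) = k%:R * F 1 + F f.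
Proof.
move=> F0 km kmf.
rewrite -(big_mkord xpredT (fun j => F (cf k f j))) /=.
rewrite (big_cat_nat (leq0n k) km) /=.
have -> : \sum_(0 <= i < k) F (cf k f i) = k%:R * F 1.
  rewrite big_nat_cond (eq_bigr (fun _ => F 1)); last first.
    by move=> i /andP[/andP[_ ik] _]; rewrite /cf ik.
  by rewrite -big_nat_cond sumr_const_nat subn0 mulr_natl.
congr (_ + _).
have [ekm|ltkm] := eqVneq k m.
  by rewrite ekm big_geq // kmf // F0.
have km1 : (k < m)%N by rewrite ltn_neqAle ltkm.
rewrite big_ltn // /cf ltnn eqxx big_nat_cond big1 ?addr0 //.
move=> i /andP[/andP[ki _] _].
have -> : (i.+1 <= k)%N = false by apply/negbTE; rewrite -ltnNge ltnW.
by rewrite gtn_eqF.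
Qed.

Lemma core (R : realType) (V : finType) (x : V -> R) (sg W f : R) (k : nat) :
  0 <= W -> 0 < sg -> (forall v, 0 <= x v <= W) -> 0 <= f ->
  \sum_v x v = (k%:R + f) * W ->
  k%:R * Num.min sg W + Num.min sg (f * W) <= \sum_v Num.min sg (x v).
Proof.
move=> W0 sg0 xW f0 sx.
pose P := [pred v | sg < x v].
pose p := #|P|.
pose E := \sum_(v | P v) (x v - sg).
have eqS : \sum_v Num.min sg (x v) = \sum_v x v - E.
  rewrite /E (bigID P) /= [in RHS](bigID P) /=.
  rewrite (eq_bigr (fun v => sg)); last by move=> v Pv; rewrite /Num.min ifT.
  rewrite [X in _ + X](eq_bigr x); last first.
    by move=> v; rewrite /P /= -leNgt => h; rewrite /Num.min; case: ltgtP h.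
  rewrite sumrB; set A := \sum_(v | P v) x v; set B := \sum_(v | ~~ P v) x v.
  rewrite sumr_const; lra.
have E1 : E <= p%:R * (W - sg).
  rewrite /E mulr_natl -sumr_const; apply: ler_sum => v _; have := xW v; lra.
have E2 : E <= \sum_v x v - p%:R * sg.
  rewrite /E sumrB sumr_const -mulr_natr (bigID P xpredT) /=.
  have : 0 <= \sum_(v | ~~ P v) x v by apply: sumr_ge0 => v _; have := xW v; lra.
  lra.
rewrite eqS.
have mW : Num.min sg W <= sg by rewrite ge_min lexx.
have [pk|kp] := leqP p k.
- have pkR : (p%:R <= k%:R :> R) by rewrite ler_nat.
  have m1 : Num.min sg W <= W by rewrite ge_min; rewrite lexx orbT.
  have m2 : Num.min sg (f * W) <= f * W by rewrite ge_min lexx orbT.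
  have m3 : W - sg <= W - Num.min sg W by lra.
  have m4 : p%:R * (W - sg) <= k%:R * (W - Num.min sg W).
    apply: (le_trans (y := p%:R * (W - Num.min sg W))).
      by apply: ler_wpM2l.
    by apply: ler_wpM2r => //; lra.
  rewrite sx; nra.
- have kpR : (k%:R + 1 <= p%:R :> R) by rewrite -(natrD R k 1) addn1 ler_nat.
  have m2 : Num.min sg (f * W) <= sg by rewrite ge_min lexx.
  have k0 : 0 <= k%:R :> R by [].
  nra.
Qed.

Lemma sum_rank (R : realType) (V : finType) (F : R -> R) (k : nat) (f : R) :
  F 0 = 0 -> (k <= #|V|)%N -> (k = #|V| -> f = 0) ->
  \sum_(v : V) F (cf k f (enum_rank v)) = k%:R * F 1 + F f.
Proof.
move=> F0 km kmf.
rewrite (reindex (@enum_val V V)) /=; last first.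
  by exists enum_rank => v _; rewrite ?enum_valK ?enum_rankK.
under eq_bigr => j _ do rewrite enum_valK.
exact: sum_cf.
Qed.

Theorem mainTheorem11 (R : realType) (V S : finType) (G : network R V S)
  (sg th : R) (ws : S -> R) (at_ : V -> S -> R) :
  valid_network G ->
  symmetric_with G sg th ws ->
  is_attack G at_ ->
  tight G th ws at_ ->
  exists (ord : 'I_#|V| -> V) (ac : V -> S -> R),
    [/\ bijective ord, is_attack G ac, consolidated G th ws ord ac,
        cost G ac <= cost G at_ & prize_of G ac = prize_of G at_].
Proof.
case=> m0 stake0 alloc0 thr0 prize0 [Hst Hal Hth] Hat Htight.
have bij : bijective (@enum_val V V).
  by exists enum_rank; [exact: enum_valK | exact: enum_rankK].
case: (pickP (@predT S)) => [s0 _|noS]; last first.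
  exists (@enum_val V V), at_; split => //.
  by move=> s; have := noS s.
case/card_gt0P: m0 => v0 _.
have sg0 : 0 < sg by rewrite -(Hst v0).
have ws0 : forall s, 0 <= ws s by move=> s; rewrite -(Hal v0 s); case: (alloc0 v0 s).
have [th0 th1] : 0 <= th /\ th <= 1 by rewrite -(Hth s0).
set tm := th * #|V|%:R.
have tm0 : 0 <= tm by apply: mulr_ge0.
have tmm : tm <= #|V|%:R by rewrite /tm -[X in _ <= X]mul1r ler_wpM2r.
have : (0 <= Num.floor tm)%R by rewrite floor_ge0.
case Efl: (Num.floor tm) => [k|//] _.
have := floor_itv tm; rewrite Efl => /andP[kle klt].
have kleR : k%:R <= tm by [].
have kltR : tm < k%:R + 1 by move: klt; rewrite intrD.
set f := tm - k%:R.
have f0 : 0 <= f by rewrite /f subr_ge0.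
have f1 : f < 1 by rewrite /f; lra.
have km : (k <= #|V|)%N by rewrite -(ler_nat R); lra.
have kmf : k = #|V| -> f = 0.
  by move=> ekm; move: f0; rewrite /f ekm; lra.
pose ac := fun (v : V) (s : S) => if attacked G at_ s then cf k f (enum_rank v) * ws s else 0.
have cf01 : forall j : nat, 0 <= cf k f j <= 1.
  by move=> j; rewrite /cf; case: ifP => _; [lra|case: ifP => _; lra].
have sumc : \sum_(v : V) cf k f (enum_rank v) = tm.
  have H := @sum_rank R V (fun c => c) k f erefl km kmf; rewrite /= in H.
  by rewrite H mulr1 /f; lra.
have sumal : forall s, \sum_(v : V) alloc G v s = #|V|%:R * ws s.
  move=> s; under eq_bigr => v _ do rewrite Hal.
  by rewrite sumr_const mulr_natl.
have sumac : forall s : S, \sum_(v : V) ac v s = if attacked G at_ s then tm * ws s else 0.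
  move=> s; rewrite /ac; case: (attacked G at_ s); last by rewrite big1.
  by rewrite -mulr_suml sumc.
have attE : forall s : S, attacked G ac s = attacked G at_ s.
  move=> s; rewrite [LHS]/attacked sumac sumal Hth.
  case h: (attacked G at_ s); first by rewrite /tm mulrA lexx.
  have : 0 <= \sum_(v : V) at_ v s by apply: sumr_ge0 => v _; case: (Hat v s).
  move: h; rewrite /attacked sumal Hth => /negbT; rewrite -!ltNge.
  move=> h1 h2; apply/negbTE; rewrite -ltNge; lra.
exists (@enum_val V V), ac; split => //.
- move=> v s; rewrite /ac Hal; case: ifP => _; last by split; [lra | apply: ws0].
  have := cf01 (enum_rank v); have := ws0 s; split; nra.
- move=> s; rewrite attE => h j /=; rewrite /ac h enum_valK Efl /cf.
  have -> : (k%:Z + 1 = (k.+1)%:Z) by rewrite -addn1 PoszD.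
  rewrite lez_nat eqz_nat eqSS.
  case: ifP => _; first by rewrite mul1r.
  case: ifP => _; last by rewrite mul0r.
  done.
- set W := \sum_(s | attacked G at_ s) ws s.
  have W0 : 0 <= W by apply: sumr_ge0 => s _.
  have cac : cost G ac = \sum_(v : V) Num.min sg (cf k f (enum_rank v) * W).
    rewrite /cost /vcost; apply: eq_bigr => v _; rewrite Hst; congr Num.min.
    rewrite (eq_bigl _ _ attE) mulr_sumr; apply: eq_bigr => s h.
    by rewrite /ac h mulrC.
  have H := @sum_rank R V (fun c => Num.min sg (c * W)) k f.
  rewrite /= mul0r min_r ?ltW // mul1r in H.
  rewrite cac H // /cost /vcost.
  under eq_bigr => v _ do rewrite Hst.
  apply: (@core R V (fun v => \sum_(s | attacked G at_ s) at_ v s)) => //.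
  + move=> v; apply/andP; split; first by apply: sumr_ge0 => s _; case: (Hat v s).
    by apply: ler_sum => s _; rewrite -(Hal v s); case: (Hat v s).
  + rewrite exchange_big /=.
    rewrite (eq_bigr (fun s => tm * ws s)); last by move=> s h; rewrite Htight.
    by rewrite -mulr_sumr /f; congr (_ * _); lra.
- by rewrite /prize_of; apply: eq_bigl => s; rewrite attE.
Qed.
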